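(* Let $H$ be a regular hexagon with vertices $W_0,\dots,W_5$ in counterclockwise order, indices taken mod 6. Let $P\in\mathbb{C}$ be arbitrary. Put $T_0=P$ and $T_{k+1}=W_k+\rho(T_k-W_k)$ for $k=0,\dots,4$. For $k=0,\dots,5$, the satellite triangle $S_k$ has base $W_{k-1}W_k$ (with $W_{-1}=W_5$) and apex $T_k$. Its oriented area $\mathcal{A}(S_k)$ is defined as the signed area of the ordered triple $(W_k,W_{k-1},T_k)$, positive when counterclockwise; equivalently $\tfrac12|W_kW_{k-1}|$ times the signed distance from $T_k$ to line $W_{k-1}W_k$, counted positive outside $H$. Then $$\sum_{k=0}^5\mathcal{A}(S_k)=\operatorname{Area}(H),$$ independently of $P$.
   Context: The plane is identified with $\mathbb{C}$, and $\rho=e^{2\pi i/3}$. $S_0$ is the triangle $W_5W_0P$. For $k\ge1$, $S_k$ is the flank triangle at $W_{k-1}$ between $H$ and the regular hexagon erected on the side $W_{k-1}T_{k-1}$ of $S_{k-1}$, and $T_k$ is the vertex of that hexagon adjacent to $W_{k-1}$. *)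

(* Defs.v *)
From Stdlib Require Import Reals.
From Coquelicot Require Import Coquelicot.
Open Scope R_scope.

Definition rho : C := (cos (2 * PI / 3), sin (2 * PI / 3)).

Definition omega : C := (cos (PI / 3), sin (PI / 3)).

(* W_0,...,W_5 (W : nat -> C, only indices 0..5 used) are the vertices of a
   regular hexagon, in counterclockwise order, with center c. *)
Definition regular_hexagon_ccw (W : nat -> C) : Prop :=
  exists c : C, W 0%nat <> c /\
    forall k : nat, (k < 6)%nat -> W k = (c + omega ^ k * (W 0%nat - c))%C.

Definition signed_area (A B D : C) : R :=
  / 2 * (fst (B - A)%C * snd (D - A)%C - snd (B - A)%C * fst (D - A)%C).

Definition prev6 (k : nat) : nat := match k with O => 5%nat | S j => j end.

Fixpoint T (W : nat -> C) (P : C) (k : nat) : C :=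
  match k with
  | O => P
  | S j => (W j + rho * (T W P j - W j))%C
  end.

Definition sat_area (W : nat -> C) (P : C) (k : nat) : R :=
  signed_area (W k) (W (prev6 k)) (T W P k).

(* area of the (convex, counterclockwise) hexagon W_0...W_5, shoelace formula *)
Definition hexagon_area (W : nat -> C) : R :=
  / 2 * sum_f_R0 (fun k => fst (W k) * snd (W (S k mod 6)%nat)
                          - snd (W k) * fst (W (S k mod 6)%nat)) 5.

(* Main.v *)
Require Import Defs.
From Stdlib Require Import Reals Lra Lia Nsatz.
From Coquelicot Require Import Coquelicot.
Open Scope R_scope.

Lemma rho_eq : rho = (-(1/2), sin (PI/3)).
Proof.
  unfold rho. replace (2 * PI / 3) with (PI - PI/3) by field.
  rewrite cos_minus, sin_PI_x, cos_PI, sin_PI, cos_PI3. f_equal; field.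
Qed.

Lemma omega_eq : omega = (1/2, sin (PI/3)).
Proof. unfold omega. rewrite cos_PI3. reflexivity. Qed.

Lemma s2 : sin (PI/3) * sin (PI/3) = 3/4.
Proof. rewrite sin_PI3. pose proof (sqrt_sqrt 3 ltac:(lra)). nra. Qed.

Lemma stepT (W : nat -> C) (P : C) (k : nat) (x y : R) :
  T W P k = (x, y) ->
  T W P (S k) = (fst (W k) + -(1/2)*(x - fst (W k)) - sin (PI/3) * (y - snd (W k)),
                 snd (W k) + sin (PI/3) * (x - fst (W k)) + -(1/2)*(y - snd (W k))).
Proof.
  intros E. simpl T. rewrite E, rho_eq. destruct (W k) as [u v].
  unfold Cplus, Cmult, Cminus, Copp; simpl. f_equal; ring.
Qed.

Lemma om_pows (s : R) : s * s = 3/4 ->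
  let o := (1/2, s) in
  Cpow o 1 = (1/2, s) /\ Cpow o 2 = (-(1/2), s) /\ Cpow o 3 = (-1, 0) /\
  Cpow o 4 = (-(1/2), -s) /\ Cpow o 5 = (1/2, -s).
Proof.
  intros Hs o. unfold o. simpl Cpow. unfold Cmult; simpl.
  assert (H2 : s^2 = 3/4) by (simpl; rewrite <- Hs; ring).
  assert (H3 : s^3 = 3/4*s) by (simpl; rewrite <- Hs; ring).
  assert (H4 : s^4 = 9/16) by (replace (s^4) with ((s*s)*(s*s)) by ring; rewrite Hs; field).
  assert (H5 : s^5 = 9/16*s) by (replace (s^5) with ((s*s)*(s*s)*s) by ring; rewrite Hs; field).
  repeat split; f_equal; ring_simplify; try rewrite H5; try rewrite H4; try rewrite H3; try rewrite H2; field.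
Qed.

Ltac redS Hs H2 H3 H4 :=
  repeat first [rewrite H4 | rewrite H3 | rewrite H2].

Theorem mainTheorem8 (W : nat -> C) (P : C) :
  regular_hexagon_ccw W ->
  sum_f_R0 (fun k => sat_area W P k) 5 = hexagon_area W.
Proof.
  intros [c [_ H]].
  assert (E0 : T W P 0 = (fst P, snd P)) by (destruct P; reflexivity).
  pose proof (stepT W P 0 _ _ E0) as E1.
  destruct (T W P 1) as [x1 y1] eqn:F1 in E1 |-.
  pose proof (stepT W P 1 _ _ F1) as E2.
  destruct (T W P 2) as [x2 y2] eqn:F2 in E2 |-.
  pose proof (stepT W P 2 _ _ F2) as E3.
  destruct (T W P 3) as [x3 y3] eqn:F3 in E3 |-.
  pose proof (stepT W P 3 _ _ F3) as E4.
  destruct (T W P 4) as [x4 y4] eqn:F4 in E4 |-.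
  pose proof (stepT W P 4 _ _ F4) as E5.
  unfold hexagon_area, sat_area. cbn [sum_f_R0 prev6 Nat.modulo Nat.divmod Nat.sub fst snd].
  idtac.
  try rewrite E0; rewrite F1, F2, F3, F4, E5.
  clear F1 F2 F3 F4 E5 E0.
  rewrite omega_eq in H.
  set (w0 := W 0%nat) in *.
  pose proof s2 as Hs. set (s := sin (PI/3)) in *.
  destruct (om_pows s Hs) as (O1 & O2 & O3 & O4 & O5).
  rewrite (H 1%nat), (H 2%nat), (H 3%nat), (H 4%nat), (H 5%nat) in * by lia.
  rewrite O1, O2, O3, O4, O5 in *.
  clearbody s w0. clear H O1 O2 O3 O4 O5.
  destruct c as [c1 c2]; destruct w0 as [a b]; destruct P as [p q].
  unfold signed_area, Cplus, Cmult, Cminus, Copp in *; simpl in *.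
  injection E1 as X1 Y1. injection E2 as X2 Y2. injection E3 as X3 Y3. injection E4 as X4 Y4.
  assert (H2 : s^2 = 3/4) by (simpl; rewrite <- Hs; ring).
  assert (H3 : s^3 = 3/4*s) by (simpl; rewrite <- Hs; ring).
  assert (H4 : s^4 = 9/16) by (replace (s^4) with ((s*s)*(s*s)) by ring; rewrite Hs; field).
  subst x1 y1.
  ring_simplify in X2. ring_simplify in Y2.
  repeat first [rewrite H4 in X2, Y2 | rewrite H3 in X2, Y2 | rewrite H2 in X2, Y2].
  subst x2 y2.
  ring_simplify in X3. ring_simplify in Y3.
  repeat first [rewrite H4 in X3, Y3 | rewrite H3 in X3, Y3 | rewrite H2 in X3, Y3].
  subst x3 y3.
  ring_simplify in X4. ring_simplify in Y4.
  repeat first [rewrite H4 in X4, Y4 | rewrite H3 in X4, Y4 | rewrite H2 in X4, Y4].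
  subst x4 y4.
  ring_simplify.
  repeat first [rewrite H4 | rewrite H3 | rewrite H2].
  field.
Qed.
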